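(* Let $n\ge 3$ and let $\mathfrak{f}_n$ be the $n$-dimensional complex (model) filiform Lie algebra with basis $\{e_i\}_{i=1}^n$ whose only nonzero brackets are $[e_1,e_h]=e_{h-1}$ for $3\le h\le n$. Then $\overline{\mu}(\mathfrak{f}_n)=n$. Moreover, the linear map sending $e_1\mapsto \sum_{i=1}^{n-2}X_{i,i+1}$ and $e_j\mapsto X_{j-1,n}$ for $2\le j\le n$ is an injective Lie algebra homomorphism $\mathfrak{f}_n\to\mathfrak{h}_n$ (a natural representative of a minimal faithful representation).
   Context: All Lie algebras are finite-dimensional over $\mathbb{C}$. For $m\in\mathbb N$, $\mathfrak{h}_m$ denotes the Lie algebra (with commutator bracket) of complex $m\times m$ upper-triangular matrices, and $X_{i,j}$ ($1\le i\le j\le m$) denotes the matrix unit with entry $1$ in position $(i,j)$ and $0$ elsewhere. For a solvable Lie algebra $\mathfrak g$, $\overline{\mu}(\mathfrak g)=\min\{m\in\mathbb N : \mathfrak{h}_m \text{ contains a Lie subalgebra isomorphic to } \mathfrak g\}$. *)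

(* Defs.v *)
From HB Require Import structures.
From mathcomp Require Import all_boot all_order all_algebra.
From mathcomp Require Import complex.
From mathcomp Require Import Rstruct.
Set Implicit Arguments. Unset Strict Implicit. Unset Printing Implicit Defensive.
Import Order.TTheory GRing.Theory Num.Theory.
Local Open Scope ring_scope.

Definition C : Type := complex Rdefinitions.R.

(* Conventions: mathematical indices are 1-based; ordinals k : 'I_n stand for
   index k+1. Vectors of the n-dimensional algebra are row vectors 'rV[C]_n,
   coordinates w.r.t. the basis e_1, ..., e_n. *)

Definition ebasis (n j : nat) : 'rV[C]_n := \row_(k < n) (k.+1 == j)%:R.

Definition fil_table (n : nat) (i j : 'I_n) : 'rV[C]_n :=
  let a := i.+1 in let b := j.+1 in
  if (a == 1%N) && (3 <= b)%N then ebasis n b.-1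
  else if (b == 1%N) && (3 <= a)%N then - ebasis n a.-1
  else 0.

Definition fil_bracket (n : nat) (x y : 'rV[C]_n) : 'rV[C]_n :=
  \sum_(i < n) \sum_(j < n) (x 0 i * y 0 j) *: fil_table i j.

(* h_m: upper-triangular m x m matrices (entries below the diagonal vanish) *)
Definition upper_tri (m : nat) (A : 'M[C]_m) : Prop :=
  forall i j : 'I_m, (j < i)%N -> A i j = 0.

Definition mx_comm (m : nat) (A B : 'M[C]_m) : 'M[C]_m := A *m B - B *m A.

Definition inj_lie_hom_into_h (n m : nat) (phi : 'rV[C]_n -> 'M[C]_m) : Prop :=
  [/\ forall (a : C) (x y : 'rV[C]_n), phi (a *: x + y) = a *: phi x + phi y,
      forall x y : 'rV[C]_n, phi (fil_bracket x y) = mx_comm (phi x) (phi y),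
      injective phi &
      forall x, upper_tri (phi x)].

Definition fil_embeds (n m : nat) : Prop :=
  exists phi : 'rV[C]_n -> 'M[C]_m, inj_lie_hom_into_h phi.

Definition mubar_fil_eq (n k : nat) : Prop :=
  fil_embeds n k /\ forall m : nat, fil_embeds n m -> (k <= m)%N.

Definition Xunit (m i j : nat) : 'M[C]_m :=
  \matrix_(r < m, c < m) ((r.+1 == i) && (c.+1 == j))%:R.

Definition fil_rep_basis (n : nat) (k : 'I_n) : 'M[C]_n :=
  if k.+1 == 1%N then \sum_(1 <= i < n.-1) Xunit n i i.+1
  else Xunit n k n.     (* e_j |-> X_{j-1,n} with j = k+1 *)

Definition fil_rep (n : nat) (x : 'rV[C]_n) : 'M[C]_n :=
  \sum_(k < n) x 0 k *: fil_rep_basis k.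

(* Main.v *)
Require Import Defs.
From HB Require Import structures.
From mathcomp Require Import all_boot all_algebra.
From mathcomp Require Import complex Rstruct.
From mathcomp Require Import ring zify.
Set Implicit Arguments. Unset Strict Implicit. Unset Printing Implicit Defensive.
Import GRing.Theory.
Local Open Scope ring_scope.

Definition tl (k : nat) (M : 'M[C]_k.+1) : 'M[C]_k :=
  \matrix_(i, j) M (widen_ord (leqnSn k) i) (widen_ord (leqnSn k) j).
Definition br (k : nat) (M : 'M[C]_k.+1) : 'M[C]_k :=
  \matrix_(i, j) M (lift ord0 i) (lift ord0 j).

Lemma tl_mul k (M N : 'M[C]_k.+1) : upper_tri N -> tl (M *m N) = tl M *m tl N.
Proof.
move=> uN; apply/matrixP => i j; rewrite !mxE big_ord_recr /=.
rewrite [N _ _]uN ?mulr0 ?addr0; last by rewrite /= ltn_ord.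
by apply: eq_bigr => l _; rewrite !mxE.
Qed.

Lemma br_mul k (M N : 'M[C]_k.+1) : upper_tri M -> br (M *m N) = br M *m br N.
Proof.
move=> uM; apply/matrixP => i j; rewrite !mxE big_ord_recl /=.
rewrite [M _ ord0]uM ?mul0r ?add0r //.
by apply: eq_bigr => l _; rewrite !mxE.
Qed.

Lemma tl_sub k (M N : 'M[C]_k.+1) : tl (M - N) = tl M - tl N.
Proof. by apply/matrixP => i j; rewrite !mxE. Qed.
Lemma br_sub k (M N : 'M[C]_k.+1) : br (M - N) = br M - br N.
Proof. by apply/matrixP => i j; rewrite !mxE. Qed.

Lemma tl_comm k (M N : 'M[C]_k.+1) : upper_tri M -> upper_tri N ->
  tl (mx_comm M N) = mx_comm (tl M) (tl N).
Proof. by move=> uM uN; rewrite /mx_comm tl_sub !tl_mul. Qed.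
Lemma br_comm k (M N : 'M[C]_k.+1) : upper_tri M -> upper_tri N ->
  br (mx_comm M N) = mx_comm (br M) (br N).
Proof. by move=> uM uN; rewrite /mx_comm br_sub !br_mul. Qed.

Lemma tl_up k (M : 'M[C]_k.+1) : upper_tri M -> upper_tri (tl M).
Proof. by move=> uM i j h; rewrite mxE uM. Qed.
Lemma br_up k (M : 'M[C]_k.+1) : upper_tri M -> upper_tri (br M).
Proof. by move=> uM i j h; rewrite mxE uM //= /bump !leq0n. Qed.

Lemma tl0 k : tl (0 : 'M[C]_k.+1) = 0.
Proof. by apply/matrixP => i j; rewrite !mxE. Qed.
Lemma br0 k : br (0 : 'M[C]_k.+1) = 0.
Proof. by apply/matrixP => i j; rewrite !mxE. Qed.

Lemma corner_supp k (Y : 'M[C]_k.+1) : upper_tri Y -> tl Y = 0 -> br Y = 0 ->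
  forall i j, ~~ ((i == ord0) && (j == ord_max)) -> Y i j = 0.
Proof.
move=> uY htl hbr i j hij.
case: (ltnP j i) => [/uY //|hji].
case: (ltnP j k) => hjk.
  have hik : (i < k)%N by apply: leq_ltn_trans hjk.
  have := congr1 (fun M : 'M[C]_k => M (Ordinal hik) (Ordinal hjk)) htl.
  rewrite !mxE => <-; congr (Y _ _); exact: val_inj.
have hj : j = ord_max by apply: val_inj => /=; apply/eqP; rewrite eqn_leq hjk -ltnS ltn_ord.
have hi0 : (0 < i)%N.
  rewrite lt0n; apply/negP => /eqP hi; move: hij; rewrite hj eqxx andbT.
  by rewrite (_ : i = ord0) ?eqxx //; apply: val_inj.
have hi' : (i.-1 < k)%N by rewrite -ltnS prednK // ltn_ord.
have hj' : (j.-1 < k)%N by rewrite -ltnS prednK ?ltn_ord // (leq_trans hi0 hji).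
have := congr1 (fun M : 'M[C]_k => M (Ordinal hi') (Ordinal hj')) hbr.
rewrite !mxE => <-; congr (Y _ _); apply: val_inj => /=; rewrite /bump leq0n add1n prednK //.
exact: (leq_trans hi0 hji).
Qed.

Lemma corner_comm k (A Y : 'M[C]_k.+1) : upper_tri A ->
  (forall i j, ~~ ((i == ord0) && (j == ord_max)) -> Y i j = 0) ->
  mx_comm A Y ord0 ord_max = (A ord0 ord0 - A ord_max ord_max) * Y ord0 ord_max.
Proof.
move=> uA hY; rewrite /mx_comm !mxE (bigD1 ord0) //= big1; last first.
  by move=> l hl; rewrite hY ?mulr0 // (negbTE hl).
rewrite (bigD1 ord_max) //= big1; last first.
  by move=> l hl; rewrite hY ?mul0r // (negbTE hl) andbF.
by rewrite !addr0 mulrBl [Y _ _ * _]mulrC.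
Qed.

Lemma corner_nz k (Y : 'M[C]_k.+1) :
  (forall i j, ~~ ((i == ord0) && (j == ord_max)) -> Y i j = 0) ->
  Y != 0 -> Y ord0 ord_max != 0.
Proof.
move=> hY; apply: contra => /eqP h; apply/eqP/matrixP => i j; rewrite mxE.
case: (boolP ((i == ord0) && (j == ord_max))) => [/andP[/eqP -> /eqP ->] //|].
exact: hY.
Qed.

Definition fsys (m n : nat) (A : 'M[C]_m) (Y : nat -> 'M[C]_m) : Prop :=
  [/\ upper_tri A /\ (forall j, upper_tri (Y j)),
      mx_comm A (Y 2%N) = 0,
      (forall j, (3 <= j <= n)%N -> mx_comm A (Y j) = Y j.-1),
      (forall i j, (2 <= i <= n)%N -> (2 <= j <= n)%N -> mx_comm (Y i) (Y j) = 0) &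
      Y 2%N != 0].

Lemma sys0 n A Y : @fsys 0 n A Y -> False.
Proof.
case=> _ _ _ _ /eqP h; apply: h; by apply/matrixP => [[]].
Qed.

Lemma sum2 (F : 'I_2 -> C) : \sum_i F i = F ord0 + F ord_max.
Proof. by rewrite big_ord_recl big_ord1; congr (_ + F _); apply: val_inj. Qed.

Lemma comm2 (M N : 'M[C]_2) i j : mx_comm M N i j =
  M i ord0 * N ord0 j + M i ord_max * N ord_max j
  - (N i ord0 * M ord0 j + N i ord_max * M ord_max j).
Proof. by rewrite /mx_comm !mxE !sum2. Qed.

Lemma sys1 n A Y : (3 <= n)%N -> @fsys 1 n A Y -> False.
Proof.
move=> hn [_ _ hch _ /eqP h]; apply: h.
have h3 : mx_comm A (Y 3%N) = Y 2%N by apply: hch; rewrite leqnn hn.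
rewrite -h3; apply/matrixP => i j; rewrite !ord1 /mx_comm !mxE !big_ord1.
by rewrite mulrC subrr.
Qed.

Lemma sys2 n A Y : (3 <= n)%N -> @fsys 2 n A Y -> False.
Proof.
move=> hn [[uA uY] hA2 hch hcm /eqP hY2]; apply: hY2.
have z1 : forall M : 'M[C]_2, upper_tri M -> M ord_max ord0 = 0.
  by move=> M uM; apply: uM.
have h3 : mx_comm A (Y 3%N) = Y 2%N by apply: hch; rewrite leqnn hn.
have c00 : Y 2%N ord0 ord0 = 0.
  by rewrite -h3 comm2 (z1 _ uA) (z1 _ (uY 3%N)); ring.
have c11 : Y 2%N ord_max ord_max = 0.
  by rewrite -h3 comm2 (z1 _ uA) (z1 _ (uY 3%N)); ring.
have c10 : Y 2%N ord_max ord0 = 0 by apply: z1.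
have hc01 := congr1 (fun M : 'M[C]_2 => M ord0 ord_max) h3.
rewrite /= comm2 in hc01.
have e2 := congr1 (fun M : 'M[C]_2 => M ord0 ord_max) hA2.
rewrite /= comm2 mxE c00 c11 in e2.
have e3m : mx_comm (Y 3%N) (Y 2%N) = 0 by apply: hcm; rewrite /= ?hn ?(ltnW hn).
have e3 := congr1 (fun M : 'M[C]_2 => M ord0 ord_max) e3m.
rewrite /= comm2 mxE c00 c11 in e3.
have cc : Y 2%N ord0 ord_max * Y 2%N ord0 ord_max = 0.
  rewrite -{1}hc01.
  transitivity (Y 3%N ord0 ord_max * (A ord0 ord0 * Y 2%N ord0 ord_max + A ord0 ord_max * 0 -
          (0 * A ord0 ord_max + Y 2%N ord0 ord_max * A ord_max ord_max))
     - A ord0 ord_max * (Y 3%N ord0 ord0 * Y 2%N ord0 ord_max + Y 3%N ord0 ord_max * 0 -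
          (0 * Y 3%N ord0 ord_max + Y 2%N ord0 ord_max * Y 3%N ord_max ord_max))); first ring.
  by rewrite e2 e3; ring.
have c01 : Y 2%N ord0 ord_max = 0 by apply/eqP; move: cc => /eqP; rewrite mulf_eq0 orbb.
apply/matrixP => i j; rewrite mxE.
have o2 : forall i : 'I_2, i = ord0 \/ i = ord_max.
  by move=> [[|[|l]] hl]; [left|right|]; by [apply: val_inj|].
by case: (o2 i) => ->; case: (o2 j) => ->.
Qed.

Lemma main_bound m : forall n A Y, (3 <= n)%N -> @fsys m n A Y -> (n <= m)%N.
Proof.
elim: m => [|m IH] n A Y hn hs; first by case: (sys0 hs).
case: m IH A Y hs => [|[|k]] IH A Y hs.
- by case: (sys1 hn hs).
- by case: (sys2 hn hs).
rewrite leqNgt; apply/negP => hnk.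
case: hs => [[uA uY] hA2 hch hcm hY2].
have shift_ok : forall j, (3 <= j <= n)%N -> mx_comm A (Y j) = Y j.-1 := hch.
case: (boolP (tl (Y 2%N) == 0)) => htl2; last first.
  suff : (n <= k.+2)%N by lia.
  apply: (IH n (tl A) (fun j => tl (Y j)) hn).
  split => //; first by split; [exact: tl_up | move=> j; exact: tl_up].
  - by rewrite -tl_comm // hA2 tl0.
  - by move=> j hj; rewrite -tl_comm // hch.
  - by move=> i j hi hj; rewrite -tl_comm // hcm // tl0.
case: (boolP (br (Y 2%N) == 0)) => hbr2; last first.
  suff : (n <= k.+2)%N by lia.
  apply: (IH n (br A) (fun j => br (Y j)) hn).
  split => //; first by split; [exact: br_up | move=> j; exact: br_up].
  - by rewrite -br_comm // hA2 br0.
  - by move=> j hj; rewrite -br_comm // hch.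
  - by move=> i j hi hj; rewrite -br_comm // hcm // br0.
have cY2 := corner_supp (uY 2%N) (eqP htl2) (eqP hbr2).
have hn4 : (4 <= n)%N by apply: leq_trans hnk.
have h3 : mx_comm A (Y 3%N) = Y 2%N by apply: hch; rewrite leqnn (ltnW hn4).
have hsub : (3 <= n.-1)%N by rewrite -ltnS prednK // (ltn_trans _ hn4).
have hrec : forall (P : 'M[C]_k.+3 -> 'M[C]_k.+2),
    upper_tri (P A) -> (forall j, upper_tri (P (Y j))) ->
    (forall M N, upper_tri M -> upper_tri N -> P (mx_comm M N) = mx_comm (P M) (P N)) ->
    P 0 = 0 -> P (Y 2%N) = 0 -> P (Y 3%N) != 0 -> False.
  move=> P uPA uPY Pc P0 PY2 PY3.
  suff : (n.-1 <= k.+2)%N by lia.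
  apply: (IH n.-1 (P A) (fun j => P (Y j.+1)) hsub).
  split => //.
  - by rewrite -Pc // h3.
  - move=> j /andP[h1 h2]; rewrite -Pc // hch; last first.
      by apply/andP; split; lia.
    by rewrite /= prednK // (ltn_trans _ h1).
  - move=> i j /andP[hi1 hi2] /andP[hj1 hj2]; rewrite -Pc // hcm ?P0 //.
      by apply/andP; split; lia.
    by apply/andP; split; lia.
case: (boolP (tl (Y 3%N) == 0)) => htl3; last first.
  apply: (hrec (@tl k.+2)) => //; first exact: tl_up.
  - by move=> j; exact: tl_up.
  - exact: tl_comm.
  - exact: tl0.
  - exact/eqP.
case: (boolP (br (Y 3%N) == 0)) => hbr3; last first.
  apply: (hrec (@br k.+2)) => //; first exact: br_up.
  - by move=> j; exact: br_up.
  - exact: br_comm.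
  - exact: br0.
  - exact/eqP.
have cY3 := corner_supp (uY 3%N) (eqP htl3) (eqP hbr3).
have cnz := corner_nz cY2 hY2.
have e1 := corner_comm uA cY3; rewrite h3 in e1.
have e2 := corner_comm uA cY2; rewrite hA2 mxE in e2.
move: cnz; rewrite e1.
have : (A ord0 ord0 - A ord_max ord_max) * Y 2%N ord0 ord_max == 0 by rewrite -e2.
rewrite mulf_eq0 (negbTE (corner_nz cY2 hY2)) orbF => /eqP ->.
by rewrite mul0r eqxx.
Qed.
Lemma ebasis_entry n j (k : 'I_n) : ebasis n j 0 k = (k.+1 == j)%:R.
Proof. by rewrite mxE. Qed.

Lemma fil_bracket_e n (i j : 'I_n) :
  fil_bracket (ebasis n i.+1) (ebasis n j.+1) = fil_table i j.
Proof.
rewrite /fil_bracket (bigD1 i) //= [X in _ + X]big1 ?addr0; last first.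
  move=> a ha; apply: big1 => b _; have ha' : (a : nat) != i := ha.
  by rewrite ebasis_entry eqSS (negbTE ha') mul0r scale0r.
rewrite (bigD1 j) //= [X in _ + X]big1 ?addr0; last first.
  move=> b hb; have hb' : (b : nat) != j := hb.
  by rewrite !ebasis_entry !eqSS eqxx (negbTE hb') mulr0 scale0r.
by rewrite !ebasis_entry !eqxx mulr1 scale1r.
Qed.

Lemma fil_bracket_nat n a b : (0 < a <= n)%N -> (0 < b <= n)%N ->
  fil_bracket (ebasis n a) (ebasis n b) =
  if (a == 1%N) && (3 <= b)%N then ebasis n b.-1
  else if (b == 1%N) && (3 <= a)%N then - ebasis n a.-1 else 0.
Proof.
case: a => // a /andP[_ ha]; case: b => // b /andP[_ hb].
exact: (fil_bracket_e (Ordinal ha) (Ordinal hb)).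
Qed.

Lemma lower_bound n m (phi : 'rV[C]_n -> 'M[C]_m) : (3 <= n)%N ->
  inj_lie_hom_into_h phi -> (n <= m)%N.
Proof.
move=> hn [hlin hbr hinj hup].
have phi0 : phi 0 = 0.
  have := hlin (-1) 0 0; rewrite scaler0 addr0 scaleN1r addNr.
  by [].
pose A := phi (ebasis n 1).
pose Y := fun j => phi (ebasis n j).
apply: (@main_bound m n A Y hn); split.
- by split=> [|j]; apply: hup.
- rewrite /A /Y -hbr fil_bracket_nat /= ?phi0 //; lia.
- move=> j /andP[h1 h2]; rewrite /A /Y -hbr fil_bracket_nat /= ?h1 //; lia.
- move=> i j /andP[h1 h2] /andP[h3 h4]; rewrite /Y -hbr fil_bracket_nat; try lia.
  have -> : (i == 1%N) = false by apply/eqP; lia.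
  by have -> : (j == 1%N) = false by apply/eqP; lia.
- apply/eqP => h; have : ebasis n 2 = 0 by apply: hinj; rewrite phi0.
  move/(congr1 (fun v : 'rV[C]_n => v 0 (Ordinal (ltn_trans (isT : (1 < 2)%N) hn)))).
  by rewrite !mxE /= => /eqP; rewrite oner_eq0.
Qed.

Lemma fil_rep_lin n (a : C) (x y : 'rV[C]_n) :
  fil_rep (a *: x + y) = a *: fil_rep x + fil_rep y.
Proof.
rewrite /fil_rep scaler_sumr -big_split; apply: eq_bigr => k _.
by rewrite !mxE scalerDl scalerA.
Qed.

Lemma fil_rep0 n : fil_rep (0 : 'rV[C]_n) = 0.
Proof. by rewrite /fil_rep big1 // => k _; rewrite mxE scale0r. Qed.

Lemma fil_repD n (x y : 'rV[C]_n) : fil_rep (x + y) = fil_rep x + fil_rep y.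
Proof. by have := fil_rep_lin 1 x y; rewrite !scale1r. Qed.

Lemma fil_repZ n a (x : 'rV[C]_n) : fil_rep (a *: x) = a *: fil_rep x.
Proof. by have := fil_rep_lin a x 0; rewrite !addr0 fil_rep0 addr0. Qed.

Lemma fil_repN n (x : 'rV[C]_n) : fil_rep (- x) = - fil_rep x.
Proof. by rewrite -scaleN1r fil_repZ scaleN1r. Qed.

Lemma fil_rep_sum n (I : finType) (F : I -> 'rV[C]_n) :
  fil_rep (\sum_i F i) = \sum_i fil_rep (F i).
Proof. exact: (big_morph _ (@fil_repD n) (fil_rep0 n)). Qed.

Lemma fil_rep_e n (k : 'I_n) : fil_rep (ebasis n k.+1) = fil_rep_basis k.
Proof.
rewrite /fil_rep (bigD1 k) //= [X in _ + X]big1 ?addr0; last first.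
  move=> a ha; have ha' : (a : nat) != k := ha.
  by rewrite ebasis_entry eqSS (negbTE ha') scale0r.
by rewrite ebasis_entry eqxx scale1r.
Qed.

Lemma mx_comm_suml m (I : finType) (c : I -> C) (M : I -> 'M[C]_m) Q :
  mx_comm (\sum_i c i *: M i) Q = \sum_i c i *: mx_comm (M i) Q.
Proof.
rewrite /mx_comm mulmx_suml mulmx_sumr -sumrB; apply: eq_bigr => i _.
by rewrite scalerBr -scalemxAl -scalemxAr.
Qed.

Lemma mx_comm_sumr m (I : finType) (c : I -> C) (M : I -> 'M[C]_m) Q :
  mx_comm Q (\sum_i c i *: M i) = \sum_i c i *: mx_comm Q (M i).
Proof.
rewrite /mx_comm mulmx_suml mulmx_sumr -sumrB; apply: eq_bigr => i _.
by rewrite scalerBr -scalemxAl -scalemxAr.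
Qed.

Definition NB p : 'M[C]_p.+3 :=
  \sum_(t < p.+1) delta_mx (inord t : 'I_p.+3) (inord t.+1).

Lemma rep0 p : fil_rep_basis (ord0 : 'I_p.+3) = NB p.
Proof.
rewrite /fil_rep_basis /= big_add1 /= big_mkord /NB; apply: eq_bigr => t _.
apply/matrixP => r c; rewrite !mxE.
have ht : (t < p.+3)%N by have := ltn_ord t; lia.
have ht1 : (t.+1 < p.+3)%N by have := ltn_ord t; lia.
by rewrite !eqSS -!val_eqE /= !inordK.
Qed.

Lemma repk p (k : 'I_p.+3) : k != ord0 ->
  fil_rep_basis k = delta_mx (inord k.-1) ord_max.
Proof.
move=> hk; have hk' : (0 < k)%N by rewrite lt0n.
rewrite /fil_rep_basis (_ : (k.+1 == 1)%N = false) /=; last by apply/eqP; lia.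
apply/matrixP => r c; rewrite !mxE.
have hk1 : (k.-1 < p.+3)%N by rewrite (leq_ltn_trans (leq_pred _)).
rewrite -!val_eqE /= inordK //.
by rewrite -[X in (_ == X)]prednK // eqSS.
Qed.

Lemma NB_X p (a : 'I_p.+3) : NB p *m delta_mx a (ord_max : 'I_p.+3) =
  \sum_(t < p.+1) delta_mx (inord t : 'I_p.+3) (ord_max : 'I_p.+3) *+ ((t.+1 : nat) == a).
Proof.
rewrite /NB mulmx_suml; apply: eq_bigr => t _; rewrite mul_delta_mx_cond.
rewrite -val_eqE /= inordK //; have := ltn_ord t; lia.
Qed.

Lemma X_NB p (a : 'I_p.+3) : delta_mx a (ord_max : 'I_p.+3) *m NB p = 0.
Proof.
rewrite /NB mulmx_sumr big1 // => t _; rewrite mul_delta_mx_cond.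
rewrite -val_eqE /= inordK; last by have := ltn_ord t; lia.
rewrite (_ : (p.+2 == t :> nat) = false) ?mulr0n //; apply/eqP; have := ltn_ord t; lia.
Qed.

Lemma X_X p (a b : 'I_p.+3) : (b < p.+2)%N ->
  delta_mx a ord_max *m delta_mx b ord_max = 0 :> 'M[C]_p.+3.
Proof.
move=> hb; rewrite mul_delta_mx_cond.
rewrite -val_eqE /= (_ : (p.+2 == b :> nat) = false) ?mulr0n //; apply/eqP; lia.
Qed.

Lemma comm0k p (k : 'I_p.+3) : k != ord0 ->
  mx_comm (NB p) (delta_mx (inord k.-1) ord_max) =
  if (2 <= k)%N then delta_mx (inord k.-2) ord_max else 0.
Proof.
move=> hk0; have hk : (0 < k)%N by rewrite lt0n.
have hk1 : (k.-1 < p.+3)%N by have := ltn_ord k; lia.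
rewrite /mx_comm X_NB subr0 NB_X.
case: ifP => hk2.
  have ht : (k.-2 < p.+1)%N by have := ltn_ord k; lia.
  rewrite (bigD1 (Ordinal ht)) //= [X in _ + X]big1 ?addr0.
    by rewrite inordK // (_ : (k.-2.+1 == k.-1)%N = true) ?mulr1n //; apply/eqP; lia.
  move=> t ht'; rewrite inordK // (_ : (t.+1 == k.-1)%N = false) ?mulr0n //.
  apply/eqP => h; move/eqP: ht'; apply; apply: val_inj => /=; lia.
apply: big1 => t _; rewrite inordK // (_ : (t.+1 == k.-1)%N = false) ?mulr0n //.
apply/eqP; lia.
Qed.

Lemma fil_rep_eb p (j : 'I_p.+3) : (2 <= j)%N ->
  fil_rep (ebasis p.+3 j) = delta_mx (inord j.-2) ord_max.
Proof.
move=> hj; have hj1 : (j.-1 < p.+3)%N by have := ltn_ord j; lia.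
have -> : (j : nat) = (Ordinal hj1).+1 by rewrite /= prednK //; lia.
rewrite fil_rep_e repk //; apply/eqP => /(congr1 val) /=; lia.
Qed.

Lemma mx_comm_anti m (M N : 'M[C]_m) : mx_comm M N = - mx_comm N M.
Proof. by rewrite /mx_comm opprB. Qed.

Lemma table_rep p (i j : 'I_p.+3) :
  fil_rep (fil_table i j) = mx_comm (fil_rep_basis i) (fil_rep_basis j).
Proof.
have o0 : forall k : 'I_p.+3, (k == ord0) = (k == 0%N :> nat) by [].
case: (boolP (i == ord0)) => hi; case: (boolP (j == ord0)) => hj.
- by rewrite (eqP hi) (eqP hj) /mx_comm subrr /fil_table /= fil_rep0.
- rewrite (eqP hi) rep0 repk // comm0k // /fil_table /=.
  rewrite (_ : (j.+1 == 1)%N = false) /=; last by apply/eqP; rewrite o0 in hj; lia.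
  case: ifP => hj2.
    have hj2' : (1 < j)%N by move: hj2; lia.
    by rewrite fil_rep_eb // hj2'.
  by rewrite fil_rep0 (_ : (1 < j)%N = false) //; move: hj2; lia.
- rewrite (eqP hj) rep0 repk // mx_comm_anti comm0k // /fil_table /=.
  rewrite (_ : (i.+1 == 1)%N = false) /=; last by apply/eqP; rewrite o0 in hi; lia.
  case: ifP => hi2.
    have hi2' : (1 < i)%N by move: hi2; lia.
    by rewrite fil_repN fil_rep_eb // hi2'.
  by rewrite fil_rep0 (_ : (1 < i)%N = false) ?oppr0 //; move: hi2; lia.
- rewrite repk // repk // /mx_comm !X_X; last first.
  + by have := ltn_ord i; have := ltn_ord j; move=> ? ?; rewrite inordK; lia.
  + by have := ltn_ord i; have := ltn_ord j; move=> ? ?; rewrite inordK; lia.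
  rewrite subrr /fil_table /=.
  rewrite (_ : (i.+1 == 1)%N = false) /=; last by apply/eqP; rewrite o0 in hi; lia.
  rewrite (_ : (j.+1 == 1)%N = false) /=; last by apply/eqP; rewrite o0 in hj; lia.
  exact: fil_rep0.
Qed.

Lemma fil_rep_br p (x y : 'rV[C]_p.+3) :
  fil_rep (fil_bracket x y) = mx_comm (fil_rep x) (fil_rep y).
Proof.
rewrite {2 3}/fil_rep mx_comm_suml /fil_bracket fil_rep_sum.
apply: eq_bigr => i _; rewrite fil_rep_sum mx_comm_sumr scaler_sumr.
apply: eq_bigr => j _; by rewrite fil_repZ table_rep scalerA.
Qed.

Lemma NB_entry p (r c : 'I_p.+3) :
  NB p r c = ((c == r.+1 :> nat) && (r < p.+1)%N)%:R.
Proof.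
rewrite /NB summxE; case: (boolP (r < p.+1)%N) => hr.
  rewrite (bigD1 (Ordinal hr)) //= [X in _ + X]big1 ?addr0.
    rewrite mxE -!val_eqE /= !inordK ?eqxx ?andbT //; lia.
  move=> t ht; rewrite mxE -!val_eqE /= inordK; last by have := ltn_ord t; lia.
  rewrite (_ : (r == t :> nat) = false) //; apply/eqP => h; move/eqP: ht; apply.
  exact: val_inj.
rewrite andbF; apply: big1 => t _; rewrite mxE -!val_eqE /= inordK; last by have := ltn_ord t; lia.
rewrite (_ : (r == t :> nat) = false) //; apply/eqP; have := ltn_ord t; lia.
Qed.

Lemma fil_rep_entry n (x : 'rV[C]_n) r c :
  fil_rep x r c = \sum_k x 0 k * fil_rep_basis k r c.
Proof. by rewrite /fil_rep summxE; apply: eq_bigr => k _; rewrite mxE. Qed.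

Lemma fil_rep_up p (x : 'rV[C]_p.+3) : upper_tri (fil_rep x).
Proof.
move=> r c hcr; rewrite fil_rep_entry big1 // => k _.
case: (boolP (k == ord0)) => hk.
  rewrite (eqP hk) rep0 NB_entry (_ : (c == r.+1 :> nat) = false) ?mulr0 //.
  apply/eqP; lia.
rewrite repk // mxE (_ : (c == ord_max) = false) ?andbF ?mulr0 //.
by rewrite -val_eqE /=; apply/eqP; have := ltn_ord r; lia.
Qed.

Lemma fil_rep_E1 p (x : 'rV[C]_p.+3) : fil_rep x ord0 (inord 1) = x 0 ord0.
Proof.
rewrite fil_rep_entry (bigD1 ord0) //= [X in _ + X]big1 ?addr0.
  by rewrite rep0 NB_entry inordK //= mulr1.
move=> k hk; rewrite repk // mxE.
rewrite (_ : (inord 1 == ord_max :> 'I_p.+3) = false) ?andbF ?mulr0 //.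
by rewrite -val_eqE /= inordK.
Qed.

Lemma fil_rep_E2 p (x : 'rV[C]_p.+3) (k : 'I_p.+3) : k != ord0 ->
  fil_rep x (inord k.-1) ord_max = x 0 k.
Proof.
move=> hk; have hk' : (0 < k)%N by rewrite lt0n.
have hk1 : (k.-1 < p.+3)%N by have := ltn_ord k; lia.
rewrite fil_rep_entry (bigD1 k) //= [X in _ + X]big1 ?addr0.
  by rewrite repk // mxE !eqxx mulr1.
move=> l hl; case: (boolP (l == ord0)) => hl0.
  rewrite (eqP hl0) rep0 NB_entry /= inordK //.
  rewrite (_ : ((p.+2 == k.-1.+1) && (k.-1 < p.+1))%N = false) ?mulr0 //.
  by apply/negbTE; apply/negP => /andP[/eqP h1 h2]; lia.
rewrite repk // mxE -val_eqE /= !inordK; last by have := ltn_ord l; lia.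
rewrite (_ : (k.-1 == l.-1)%N = false) ?mulr0 //.
apply/eqP => h; move/eqP: hl; apply; apply: val_inj => /=.
move: hl0; rewrite -val_eqE /= => hl0; lia.
by have := ltn_ord l; lia.
Qed.

Lemma fil_rep_inj p : injective (@fil_rep p.+3).
Proof.
move=> x y hxy; apply/rowP => k.
case: (boolP (k == ord0)) => hk.
  by rewrite (eqP hk) -fil_rep_E1 hxy fil_rep_E1.
by rewrite -(fil_rep_E2 x hk) hxy fil_rep_E2.
Qed.

Theorem proposition5 (n : nat) (hn : (3 <= n)%N) :
  mubar_fil_eq n n /\ inj_lie_hom_into_h (@fil_rep n).
Proof.
have hom : inj_lie_hom_into_h (@fil_rep n).
  case: n hn => [|[|[|p]]] // _; split.
  - exact: fil_rep_lin.
  - exact: fil_rep_br.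
  - exact: fil_rep_inj.
  - exact: fil_rep_up.
split => //; split; first by exists (@fil_rep n).
move=> m [phi hphi]; exact: lower_bound hn hphi.
Qed.
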